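(* In the contention game with $k=2$ channels under acknowledgement-based feedback and $2\le n\le4$ players, let all players other than $i$ use $f^2$, and let player $i$ use any protocol $r_i\notin\mathcal G^{f^2}$. Then the expected latency of player $i$ under the profile $(f^2_{-i},r_i)$ is at least $2^n/n$.
   Context: Contention game: $n$ players, channels $K=\{1,\dots,k\}$, slots $t=1,2,\dots$; each player has one packet, initially pending; in each slot a pending player chooses (possibly randomly) an action in $\{0,1,\dots,k\}$ ($0$ = idle, $a$ = transmit on channel $a$); a lone transmitter on a channel succeeds and leaves, colliding transmitters remain pending. Latency = slot of successful transmission. Acknowledgement-based: decision rules depend only on the personal action history; only transmitters learn whether they succeeded. $f^2$ is the protocol that in every slot, regardless of history, transmits on each of the two channels with probability $1/2$ and never idles. For $\tau^*\ge1$ and a personal history $h_{i,\tau^*}=(a_{i,1},\dots,a_{i,\tau^*})$, $g_i(h_{i,\tau^*})$ is the protocol playing $a_{i,t}$ with probability $1$ for $1\le t\le\tau^*$ and following $f^2$ for $t>\tau^*$. $\mathcal G^{f^2}$ is the set of all such $g_i(h_{i,\tau^*})$, over all $\tau^*\ge1$, for which $h_{i,\tau^*}$ occurs with positive probability when all players use $f^2$. *)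

(* Defs.v *)
From HB Require Import structures.
From mathcomp Require Import all_boot all_order all_algebra.
From mathcomp Require Import all_classical all_reals all_analysis.
Set Implicit Arguments. Unset Strict Implicit. Unset Printing Implicit Defensive.
Import Order.TTheory GRing.Theory Num.Theory.
Local Open Scope ring_scope.

(* Contention game with k = 2 channels, n players, acknowledgement-based
   feedback.  Actions: 'I_3, where 0 = idle, 1 / 2 = transmit on channel 1 / 2. *)

Definition action := 'I_3.
(* personal action history (a_1, ..., a_t), chronological order *)
Definition history := seq action.

Section Game.
Variable R : realType.

(* A (behavioural) protocol: maps the personal action history of a pending
   player to a distribution over the actions of the next slot. *)
Definition protocol := history -> {ffun action -> R}.

Definition is_protocol (p : protocol) : Prop :=
  forall s, (forall a, 0 <= p s a) /\ \sum_a p s a = 1.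

Definition f2 : protocol :=
  fun _ => [ffun a : action => if a == ord0 then 0 else 2%:R^-1].

Variable n : nat.

Definition aprofile := {ffun 'I_n -> action}.
(* game state: set of pending players and personal histories *)
Definition gstate := ({set 'I_n} * ('I_n -> history))%type.

Definition init_state : gstate := ([set: 'I_n]%SET, fun _ => [::]).

Definition succeeds (P : {set 'I_n}) (a : aprofile) (j : 'I_n) : bool :=
  [&& j \in P, a j != ord0 & [forall l in P, (l != j) ==> (a l != a j)]].

Definition step (st : gstate) (a : aprofile) : gstate :=
  (st.1 :\: [set j | succeeds st.1 a j],
   fun j => if j \in st.1 then rcons (st.2 j) (a j) else st.2 j).

(* probability that the action profile a is played in state st
   (players who have left are recorded as idle) *)
Definition weight (prots : 'I_n -> protocol) (st : gstate) (a : aprofile) : R :=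
  \prod_j (if j \in st.1 then prots j (st.2 j) (a j) else (a j == ord0)%:R).

Fixpoint run (prots : 'I_n -> protocol) (st : gstate) (w : R)
    (tr : seq aprofile) : gstate * R :=
  match tr with
  | [::] => (st, w)
  | a :: tr' => run prots (step st a) (w * weight prots st a) tr'
  end.

(* probability that player i succeeds exactly at slot t (t >= 1),
   i.e. that its latency equals t *)
Definition plat (prots : 'I_n -> protocol) (i : 'I_n) (t : nat) : R :=
  \sum_(tr : (t.-1).-tuple aprofile) \sum_(a : aprofile)
    let sw := run prots init_state 1 tr in
    sw.2 * weight prots sw.1 a * (succeeds sw.1.1 a i)%:R.

(* expected latency of player i (in the extended reals; +oo if with positive
   probability player i never succeeds) *)
Definition exp_latency (prots : 'I_n -> protocol) (i : 'I_n) : \bar R :=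
  (\sum_(1 <= t <oo) ((t%:R * plat prots i t)%:E) +
   (if (\sum_(1 <= t <oo) (plat prots i t)%:E < 1)%E then +oo else 0))%E.

Definition hist_prob (prots : 'I_n -> protocol) (i : 'I_n) (h : history) : R :=
  \sum_(tr : (size h).-tuple aprofile)
    let sw := run prots init_state 1 tr in
    sw.2 * (sw.1.2 i == h)%:R.

Definition g_dev (h : history) : protocol :=
  fun s => if (size s < size h)%N
           then [ffun a : action => (a == nth ord0 h (size s))%:R]
           else f2 s.

Definition in_G (i : 'I_n) (r : protocol) : Prop :=
  exists h : history,
    (1 <= size h)%N /\ 0 < hist_prob (fun _ => f2) i h /\ r = g_dev h.

End Game.

(* Main.v *)
Require Import Defs.
From HB Require Import structures.
From mathcomp Require Import all_boot all_order all_algebra.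
From mathcomp Require Import all_classical all_reals all_analysis.
From mathcomp Require Import ring lra.
Import Order.TTheory GRing.Theory Num.Theory.
Local Open Scope ring_scope.


Definition dlt (R : realType) (y z : action) : R := (z == y)%:R.
Definition wset {R : realType} {n} (w : 'I_n -> action -> R) (l : 'I_n) (y : action) :=
  fun j => if j == l then dlt R y else w j.

Lemma peel (R : realType) n (w : 'I_n -> action -> R) (l : 'I_n) (G : aprofile n -> R) :
  \sum_(a : aprofile n) (\prod_j w j (a j)) * G a =
  \sum_(y : action) w l y * \sum_(a : aprofile n) (\prod_j wset w l y j (a j)) * G a.
Proof.
under [RHS]eq_bigr do rewrite big_distrr /=.
rewrite exchange_big /=; apply: eq_bigr => a _.
rewrite [RHS](bigD1 (a l)) //= [X in _ + X]big1 ?addr0.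
  rewrite (bigD1 l) //= [in RHS](bigD1 l) //= /wset eqxx /dlt eqxx mul1r.
  rewrite mulrA; congr (_ * _ * _); apply: eq_bigr => j /negbTE ->; by [].
move=> y /negbTE ya.
by rewrite (bigD1 l) //= /wset eqxx /dlt eq_sym ya mul0r mul0r mulr0.
Qed.

Lemma delta_sum (R : realType) n (b : 'I_n -> action) (G : aprofile n -> R) :
  \sum_(a : aprofile n) (\prod_j dlt R (b j) (a j)) * G a = G [ffun j => b j].
Proof.
rewrite (bigD1 [ffun j => b j]) //= [X in _ + X]big1 ?addr0.
  by rewrite big1 ?mul1r // => j _; rewrite ffunE /dlt eqxx.
move=> a ab.
have [j ajb] : exists j, a j != b j.
  apply/existsP; apply: contraR ab; rewrite negb_exists => /forallP H.
  by apply/eqP/ffunP => j; rewrite ffunE; apply/eqP; move: (H j); rewrite negbK.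
by rewrite (bigD1 j) //= /dlt (negbTE ajb) mul0r mul0r.
Qed.

Definition c1 : action := @Ordinal 3 1 isT.
Definition c2 : action := @Ordinal 3 2 isT.
Definition f2v (R : realType) (y : action) : R := f2 R [::] y.
Definition wO {R : realType} {n} (O : {set 'I_n}) (b : 'I_n -> action) : 'I_n -> action -> R :=
  fun j => if j \in O then f2v R else dlt R (b j).
Definition cnt {n} (O : {set 'I_n}) (a : aprofile n) (y : action) : nat :=
  \sum_(l in O) (a l == y).

Fixpoint D {R : realType} (m : nat) (phi : nat -> R) : R :=
  if m is m'.+1 then (D m' (fun j => phi j.+1) + D m' phi) / 2%:R else phi 0%N.

Lemma sum_action (R : realType) (F : action -> R) :
  \sum_(y : action) F y = F ord0 + F c1 + F c2.
Proof.
rewrite !big_ord_recl big_ord0 addr0 addrA.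
by congr (F _ + F _ + F _); apply: val_inj.
Qed.

Lemma binom (R : realType) n m : forall (O : {set 'I_n}) b (phi : nat -> R), #|O| = m ->
  \sum_(a : aprofile n) (\prod_j wO O b j (a j)) * phi (cnt O a c1) = D m phi.
Proof.
elim: m => [|m IH] O b phi hO.
  move/cards0_eq: hO => ->.
  under eq_bigr => a _.
    rewrite /cnt big_set0.
    under eq_bigr => j _ do rewrite /wO finset.in_set0.
    over.
  by rewrite delta_sum.
have [l lO] : exists l, l \in O.
  by apply/set0Pn; rewrite -card_gt0 hO.
have hO' : #|O :\ l| = m by move: hO; rewrite (cardsD1 l O) lO add1n => -[].
rewrite (peel _ _ _ l (fun a : aprofile n => phi (cnt O a c1))).
have key : forall y, \sum_(a : aprofile n) (\prod_j wset (wO O b) l y j (a j)) * phi (cnt O a c1)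
   = D m (fun j => phi (j + (y == c1))%N).
  move=> y.
  rewrite -(IH (O :\ l) (fun j => if j == l then y else b j) _ hO').
  apply: eq_bigr => a _ /=.
  have Hw : \prod_(j : 'I_n) wset (wO (R:=R) O b) l y j (a j) =
            \prod_(j : 'I_n) wO (R:=R) (O :\ l) (fun j => if j == l then y else b j) j (a j).
    apply: eq_bigr => j _; rewrite /wset /wO in_setD1.
    by case: (j == l).
  rewrite Hw; case: (eqVneq (a l) y) => [aly | alny].
    by rewrite /cnt (big_setD1 l lO) /= aly addnC.
  rewrite (bigD1 l) //= /wO in_setD1 (eqxx l) /= /dlt (negbTE alny) !mul0r //.
under eq_bigr => y _ do rewrite key /wO lO.
rewrite sum_action /=.
rewrite /f2v /f2 !ffunE /=.
have -> : (fun j => phi (j + true)%N) = (fun j => phi j.+1).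
  by apply: funext => j; rewrite addn1.
have -> : (fun j => phi (j + false)%N) = phi.
  by apply: funext => j; rewrite addn0.
rewrite mul0r add0r.
by rewrite mulrDl !(mulrC _ 2^-1).
Qed.

Definition V (R : realType) (k : nat) : R := if k == 1%N then 1 else (2 ^ k)%:R / k%:R.

Definition Gf (R : realType) (k : nat) (x : action) (n1 n2 : nat) : R :=
  if (x != ord0) && ((if x == c1 then n1 else n2) == 0%N) then 0
  else V R (k - ((x != c1) && (n1 == 1%N)) - ((x != c2) && (n2 == 1%N))).

Definition bvec {n} (i : 'I_n) (x : action) := fun j => if j == i then x else ord0.

Lemma dlt_neq0 (R : realType) y z : dlt R y z != 0 -> z = y.
Proof. by rewrite /dlt; case: (eqVneq z y) => // _; rewrite eqxx. Qed.

Lemma f2v_neq0 (R : realType) y : f2v R y != 0 -> y != ord0.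
Proof. by rewrite /f2v /f2 ffunE; case: (y == ord0) => //; rewrite eqxx. Qed.

Lemma supp (R : realType) n (P : {set 'I_n}) i x (a : aprofile n) :
  i \in P ->
  \prod_j wO (R:=R) (P :\ i) (bvec i x) j (a j) != 0 ->
  [/\ a i = x, forall j, j \notin P -> a j = ord0 & forall l, l \in P :\ i -> a l != ord0].
Proof.
move=> iP /prodf_neq0 H; split.
- by move: (H i isT); rewrite /wO /bvec in_setD1 (eqxx i) /= => /dlt_neq0.
- move=> j jP; have ji : j != i by apply: contraNneq jP => ->.
  by move: (H j isT); rewrite /wO /bvec in_setD1 (negbTE jP) andbF (negbTE ji) => /dlt_neq0.
- by move=> l lO; move: (H l isT); rewrite /wO lO => /f2v_neq0.
Qed.

Lemma act12 {y : action} : y != ord0 -> y = c1 \/ y = c2.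
Proof.
by case: y => [[|[|[|m]]] hm] // _; [left|right]; apply: val_inj.
Qed.

Lemma cnt_split n (O : {set 'I_n}) (a : aprofile n) :
  (forall l, l \in O -> a l != ord0) -> (cnt O a c1 + cnt O a c2 = #|O|)%N.
Proof.
move=> H; rewrite /cnt -big_split /= -sum1_card; apply: eq_bigr => l lO.
by case: (act12 (H l lO)) => ->.
Qed.

Lemma cnt_x n (O : {set 'I_n}) (a : aprofile n) x :
  x != ord0 -> (if x == c1 then cnt O a c1 else cnt O a c2) = cnt O a x.
Proof. by case/act12 => ->. Qed.

Lemma succ_i n (P : {set 'I_n}) i x (a : aprofile n) :
  i \in P -> a i = x ->
  succeeds P a i = (x != ord0) && (cnt (P :\ i) a x == 0%N).
Proof.
move=> iP ai; rewrite /succeeds iP ai /=; congr andb.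
rewrite /cnt sum_nat_eq0; apply/idP/idP.
  move/forall_inP => H; apply/forallP => l; apply/implyP; rewrite in_setD1 => /andP[li lP].
  by move: (H l lP); rewrite li /=; case: (a l == x).
move/forallP => H; apply/forall_inP => l lP; apply/implyP => li.
by move: (H l); rewrite in_setD1 li lP /=; case: (a l == x).
Qed.

Lemma succ_l n (P : {set 'I_n}) i x (a : aprofile n) l :
  i \in P -> a i = x -> l \in P :\ i -> a l != ord0 ->
  succeeds P a l = (x != a l) && (cnt (P :\ i) a (a l) == 1%N).
Proof.
move=> iP ai lO al0.
have lP : l \in P by move: lO; rewrite in_setD1 => /andP[].
have il : i != l by move: lO; rewrite in_setD1 eq_sym => /andP[].
rewrite /succeeds lP al0 /= /cnt (big_setD1 l lO) /= eqxx add1n eqSS sum_nat_eq0.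
apply/idP/idP.
  move/forall_inP => H; apply/andP; split.
    by move: (H i iP); rewrite il ai.
  apply/forallP => l'; apply/implyP; rewrite !in_setD1 => /andP[l'l /andP[l'i l'P]].
  by move: (H l' l'P); rewrite l'l /=; case: (a l' == a l).
case/andP => xal /forallP H; apply/forall_inP => l' l'P; apply/implyP => l'l.
case: (eqVneq l' i) => [->|l'i]; first by rewrite ai.
by move: (H l'); rewrite !in_setD1 l'l l'i l'P /=; case: (a l' == a l).
Qed.

Lemma mulK1 (m : nat) (b : bool) : (m * (b && (m == 1%N)) = b && (m == 1%N))%N.
Proof. by case: b => //=; case: (eqVneq m 1%N) => [->|] //= _; rewrite muln0. Qed.

Lemma cardS n (P : {set 'I_n}) i x (a : aprofile n) :
  i \in P -> a i = x -> ~~ succeeds P a i ->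
  (forall l, l \in P :\ i -> a l != ord0) ->
  #|P :&: [set j | succeeds P a j]| =
  (((x != c1) && (cnt (P :\ i) a c1 == 1%N)) + ((x != c2) && (cnt (P :\ i) a c2 == 1%N)))%N.
Proof.
move=> iP ai nsi ain.
have -> : #|P :&: [set j | succeeds P a j]| = (\sum_(j in P) succeeds P a j)%N.
  rewrite -sum1_card big_mkcond [RHS]big_mkcond /=; apply: eq_bigr => j _.
  by rewrite finset.in_setI inE; case: (j \in P); case: (succeeds P a j).
rewrite (big_setD1 i iP) /= (negbTE nsi) add0n.
rewrite (eq_bigr (fun l => (a l == c1) * ((x != c1) && (cnt (P :\ i) a c1 == 1%N))
                        + (a l == c2) * ((x != c2) && (cnt (P :\ i) a c2 == 1%N)))%N); last first.
  move=> l lO; rewrite (succ_l _ _ _ _ _ _ iP ai lO (ain l lO)).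
  by case: (act12 (ain l lO)) => ->; rewrite ?mul1n ?mul0n ?addn0.
rewrite big_split /= -!big_distrl /= -/(cnt _ _ c1) -/(cnt _ _ c2).
by rewrite !mulK1.
Qed.

Lemma g_char (R : realType) n (P : {set 'I_n}) i x (a : aprofile n) :
  i \in P ->
  \prod_j wO (R:=R) (P :\ i) (bvec i x) j (a j) != 0 ->
  (i \in P :\: [set j | succeeds P a j])%:R * V R #|P :\: [set j | succeeds P a j]|
  = Gf R #|P| x (cnt (P :\ i) a c1) (cnt (P :\ i) a c2).
Proof.
move=> iP /(supp _ _ _ _ _ _ iP) [ai aout ain].
have Hsi := succ_i _ _ _ _ _ iP ai.
rewrite /Gf finset.in_setD iP inE Hsi /=.
case: (eqVneq x ord0) => [x0|xn0] /=.
  rewrite mul1r; congr (V R _).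
  rewrite cardsD -subnDA; congr (_ - _)%N.
  by apply: cardS => //; rewrite Hsi x0.
rewrite (cnt_x _ _ _ _ xn0).
case Hc: (cnt (P :\ i) a x == 0%N) => /=; first by rewrite mul0r.
rewrite mul1r; congr (V R _).
rewrite cardsD -subnDA; congr (_ - _)%N.
by apply: cardS => //; rewrite Hsi xn0 /= Hc.
Qed.



Lemma numeric (R : realType) m (x : action) : (m <= 3)%N ->
  V R m.+1 - 1 <= D m (fun j => Gf R m.+1 x j (m - j)).
Proof.
case: x => [[|[|[|?]]] hx] //;
(case: m => [|[|[|[|?]]]] //= _; rewrite /Gf /V /=).
all: rewrite ?subSS ?subn0 ?subn1 /=; try lra.
Qed.

Lemma bellman (R : realType) n (F : 'I_n -> protocol R) (i : 'I_n) (st : gstate n) :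
  i \in st.1 -> (#|st.1| <= 4)%N -> is_protocol (F i) -> (forall j, j != i -> F j = f2 R) ->
  V R #|st.1| - 1 <=
  \sum_(a : aprofile n) weight F st a * ((i \in (step st a).1)%:R * V R #|(step st a).1|).
Proof.
case: st => P H /= iP hP hr hF.
pose g := fun a : aprofile n =>
  (i \in P :\: [set j | succeeds P a j])%:R * V R #|P :\: [set j | succeeds P a j]|.
pose w := fun j => if j \in P then (F j (H j) : action -> R) else dlt R ord0.
have -> : \sum_(a : aprofile n) weight F (P, H) a *
            ((i \in (step (P, H) a).1)%:R * V R #|(step (P, H) a).1|)
          = \sum_(a : aprofile n) (\prod_j w j (a j)) * g a.
  apply: eq_bigr => a _; rewrite /weight /step /=; congr (_ * _).
  by apply: eq_bigr => j _; rewrite /w; case: (j \in P).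
rewrite (peel _ _ w i g).
have Ex : forall x, V R #|P| - 1 <=
    \sum_(a : aprofile n) (\prod_j wset w i x j (a j)) * g a.
  move=> x.
  have -> : \sum_(a : aprofile n) (\prod_j wset w i x j (a j)) * g a =
            \sum_(a : aprofile n) (\prod_j wO (R:=R) (P :\ i) (bvec i x) j (a j)) * g a.
    apply: eq_bigr => a _; congr (_ * _); apply: eq_bigr => j _.
    rewrite /wset /wO /w /bvec in_setD1.
    case: (eqVneq j i) => [->|ji] //=.
    by case: (j \in P) => //; rewrite hF.
  have -> : \sum_(a : aprofile n) (\prod_j wO (R:=R) (P :\ i) (bvec i x) j (a j)) * g a =
            \sum_(a : aprofile n) (\prod_j wO (R:=R) (P :\ i) (bvec i x) j (a j)) *
               (fun k => Gf R #|P| x k (#|P :\ i| - k)) (cnt (P :\ i) a c1).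
    apply: eq_bigr => a _.
    case: (eqVneq (\prod_j wO (R:=R) (P :\ i) (bvec i x) j (a j)) 0) => [->|nz].
      by rewrite !mul0r.
    rewrite /g (g_char _ _ _ _ _ _ iP nz) /=.
    have [_ _ ain] := supp _ _ _ _ _ _ iP nz.
    by rewrite -(cnt_split _ _ _ ain) addKn.
  rewrite (binom _ _ _ _ _ (fun k => Gf R #|P| x k (#|P :\ i| - k)) erefl).
  have hc : #|P| = #|P :\ i|.+1 by rewrite (cardsD1 i P) iP.
  rewrite hc; apply: numeric.
  by move: hP; rewrite hc.
have [hr0 hr1] := hr (H i).
have wi : forall x, w i x = F i (H i) x by move=> x; rewrite /w iP.
apply: (@le_trans _ _ (\sum_(y : action) w i y * (V R #|P| - 1))).
  by rewrite -big_distrl /= (eq_bigr _ (fun y _ => wi y)) hr1 mul1r.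
apply: ler_sum => y _; apply: ler_wpM2l; first by rewrite wi hr0.
exact: Ex.
Qed.



Lemma f2_prot (R : realType) : is_protocol (f2 R).
Proof.
move=> s; split.
  by move=> y; rewrite /f2 ffunE; case: (y == ord0) => //; rewrite invr_ge0 ler0n.
rewrite sum_action /f2 !ffunE /=.
by rewrite add0r; lra.
Qed.

Lemma weight_ge0 (R : realType) n (F : 'I_n -> protocol R) st a :
  (forall j, is_protocol (F j)) -> 0 <= weight F st a.
Proof.
move=> hF; rewrite /weight; apply: prodr_ge0 => j _.
by case: (j \in st.1); [case: (hF j (st.2 j)) | rewrite ler0n].
Qed.

Lemma weight_sum1 (R : realType) n (F : 'I_n -> protocol R) st :
  (forall j, is_protocol (F j)) -> \sum_(a : aprofile n) weight F st a = 1.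
Proof.
move=> hF; rewrite /weight.
rewrite -(bigA_distr_bigA (fun j y => if j \in st.1 then F j (st.2 j) y else (y == ord0)%:R)) /=.
apply: big1 => j _; case: (j \in st.1); first by case: (hF j (st.2 j)).
by rewrite sum_action /= !addr0.
Qed.

Lemma run_ge0 (R : realType) n (F : 'I_n -> protocol R) st w tr :
  (forall j, is_protocol (F j)) -> 0 <= w -> 0 <= (run F st w tr).2.
Proof.
move=> hF; elim: tr st w => [|a tr IH] st w //= w0.
by apply: IH; rewrite mulr_ge0 // weight_ge0.
Qed.

Lemma run_rcons (R : realType) n (F : 'I_n -> protocol R) st w tr a :
  run F st w (rcons tr a) =
  (step (run F st w tr).1 a, (run F st w tr).2 * weight F (run F st w tr).1 a).
Proof. by elim: tr st w => [|b tr IH] st w //=. Qed.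

Lemma sum_tuple_cons (R : realType) (A : finType) T (G : seq A -> R) :
  \sum_(u : T.+1.-tuple A) G u = \sum_(a : A) \sum_(t : T.-tuple A) G (a :: t).
Proof.
rewrite pair_big /=.
rewrite (reindex (fun p : A * T.-tuple A => cons_tuple p.1 p.2)) /=; last first.
  exists (fun u : T.+1.-tuple A => (thead u, behead_tuple u)) => [[a t] _ | u _] /=.
    by congr (_, _); apply: val_inj.
  by rewrite [RHS]tuple_eta.
by apply: eq_bigr => -[a t].
Qed.

Lemma sum_tuple0 (R : realType) (A : finType) (G : seq A -> R) :
  \sum_(u : 0.-tuple A) G u = G [::].
Proof.
by rewrite (big_pred1 [tuple]) // => u; apply/esym/eqP; apply: tuple0.
Qed.

Lemma sum_tuple_rcons (R : realType) (A : finType) T : forall (G : seq A -> R),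
  \sum_(u : T.+1.-tuple A) G u = \sum_(t : T.-tuple A) \sum_(a : A) G (rcons t a).
Proof.
elim: T => [|T IH] G.
  rewrite sum_tuple_cons (sum_tuple0 _ _ (fun s => \sum_a G (rcons s a))).
  by apply: eq_bigr => a _; rewrite (sum_tuple0 _ _ (fun s => G (a :: s))).
rewrite sum_tuple_cons.
rewrite (eq_bigr (fun b => \sum_(t : T.-tuple A) \sum_(a : A) G (b :: rcons t a))); last first.
  by move=> b _; rewrite (IH (fun s => G (b :: s))).
by rewrite (sum_tuple_cons _ _ _ (fun s => \sum_(a : A) G (rcons s a))).
Qed.



Definition qq {R : realType} {n} (F : 'I_n -> protocol R) (i : 'I_n) T : R :=
  \sum_(u : T.-tuple (aprofile n))
    (run F (init_state n) 1 u).2 * (i \in (run F (init_state n) 1 u).1.1)%:R.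

Definition AA {R : realType} {n} (F : 'I_n -> protocol R) (i : 'I_n) T : R :=
  \sum_(u : T.-tuple (aprofile n))
    (run F (init_state n) 1 u).2 * ((i \in (run F (init_state n) 1 u).1.1)%:R *
      (T%:R + V R #|(run F (init_state n) 1 u).1.1|)).

Lemma key_step (R : realType) n (st : gstate n) a i :
  (i \in (step st a).1)%:R + (succeeds st.1 a i)%:R = (i \in st.1)%:R :> R.
Proof.
rewrite /step /= finset.in_setD inE.
case Hs: (succeeds st.1 a i).
  have -> : i \in st.1 by move: Hs => /and3P [].
  by rewrite /= add0r.
by rewrite addr0.
Qed.

Lemma V_ge0 (R : realType) k : 0 <= V R k.
Proof. by rewrite /V; case: (k == 1%N) => //; rewrite divr_ge0 ?ler0n. Qed.

Lemma V_le4 (R : realType) k : (k <= 4)%N -> V R k <= 4%:R.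
Proof.
case: k => [|[|[|[|[|?]]]]] // _; rewrite /V /= ?invr0 ?mulr0 ?ler0n; try lra.
all: by [].
Qed.



Lemma q_step (R : realType) n (F : 'I_n -> protocol R) i T :
  (forall j, is_protocol (F j)) ->
  qq F i T.+1 = qq F i T - plat F i T.+1.
Proof.
move=> hF.
rewrite /qq (sum_tuple_rcons _ _ _
  (fun s => (run F (init_state n) 1 s).2 * (i \in (run F (init_state n) 1 s).1.1)%:R)).
rewrite /plat /= -sumrB; apply: eq_bigr => t _.
under eq_bigr do rewrite run_rcons /=.
set sw := run F (init_state n) 1 t.
have E : \sum_(a : aprofile n) (sw.2 * weight F sw.1 a * (i \in (step sw.1 a).1)%:R
           + sw.2 * weight F sw.1 a * (succeeds sw.1.1 a i)%:R)
         = sw.2 * (i \in sw.1.1)%:R.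
  under eq_bigr do rewrite -mulrDr key_step.
  by rewrite -big_distrl -big_distrr /= weight_sum1 // mulr1.
by rewrite -E big_split /= addrK.
Qed.

Lemma pot_step (R : realType) n (F : 'I_n -> protocol R) i T :
  (forall j, is_protocol (F j)) -> (forall j, j != i -> F j = f2 R) -> (n <= 4)%N ->
  AA F i T <= AA F i T.+1 + T.+1%:R * plat F i T.+1.
Proof.
move=> hF hFo hn.
rewrite /AA (sum_tuple_rcons _ _ _
  (fun s => (run F (init_state n) 1 s).2 * ((i \in (run F (init_state n) 1 s).1.1)%:R *
      (T.+1%:R + V R #|(run F (init_state n) 1 s).1.1|)))).
rewrite /plat /= big_distrr -big_split /=; apply: ler_sum => t _.
under eq_bigr do rewrite run_rcons /=.
set sw := run F (init_state n) 1 t.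
have W0 : 0 <= sw.2 by apply: run_ge0.
set T1 : R := T.+1%:R.
have -> : \sum_(a : aprofile n) sw.2 * weight F sw.1 a * ((i \in (step sw.1 a).1)%:R *
              (T1 + V R #|(step sw.1 a).1|))
          + T1 * \sum_(a : aprofile n) sw.2 * weight F sw.1 a * (succeeds sw.1.1 a i)%:R
        = sw.2 * (T1 * \sum_(a : aprofile n) weight F sw.1 a *
                     ((i \in (step sw.1 a).1)%:R + (succeeds sw.1.1 a i)%:R)
                  + \sum_(a : aprofile n) weight F sw.1 a *
                     ((i \in (step sw.1 a).1)%:R * V R #|(step sw.1 a).1|)).
  rewrite [in RHS]big_distrr -big_split [RHS]big_distrr /=.
  rewrite big_distrr -big_split /=; apply: eq_bigr => a _; ring.
under [X in _ <= sw.2 * (T1 * X + _)]eq_bigr do rewrite key_step.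
rewrite -big_distrl /= weight_sum1 // mul1r.
apply: ler_wpM2l => //.
case iP: (i \in sw.1.1) => /=.
  rewrite mul1r mulr1 /T1 -natr1.
  have hb := @bellman R n F i sw.1 iP (leq_trans (max_card _) _) (hF i) hFo.
  rewrite card_ord in hb; move: (hb hn); lra.
rewrite mul0r mulr0 add0r; apply: sumr_ge0 => a _.
by rewrite mulr_ge0 ?weight_ge0 // mulr_ge0 ?V_ge0.
Qed.

Lemma pot_all (R : realType) n (F : 'I_n -> protocol R) i T :
  (forall j, is_protocol (F j)) -> (forall j, j != i -> F j = f2 R) -> (n <= 4)%N ->
  V R n <= AA F i T + \sum_(1 <= t < T.+1) t%:R * plat F i t.
Proof.
move=> hF hFo hn; elim: T => [|T IH].
  rewrite big_geq // addr0 /AA (sum_tuple0 _ _ (fun s =>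
    (run F (init_state n) 1 s).2 * ((i \in (run F (init_state n) 1 s).1.1)%:R *
      (0%:R + V R #|(run F (init_state n) 1 s).1.1|)))) /=.
  by rewrite finset.in_setT cardsT card_ord mul1r mul1r add0r.
apply: (le_trans IH).
rewrite [X in _ <= _ + X]big_nat_recr //= addrA [X in _ <= X]addrAC lerD2r.
exact: pot_step.
Qed.

Lemma q_all (R : realType) n (F : 'I_n -> protocol R) i T :
  (forall j, is_protocol (F j)) ->
  qq F i T = 1 - \sum_(1 <= t < T.+1) plat F i t.
Proof.
move=> hF; elim: T => [|T IH].
  rewrite big_geq // subr0 /qq (sum_tuple0 _ _ (fun s =>
    (run F (init_state n) 1 s).2 * (i \in (run F (init_state n) 1 s).1.1)%:R)) /=.
  by rewrite finset.in_setT mul1r.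
by rewrite q_step // IH [X in _ = _ - X]big_nat_recr //= opprD addrA.
Qed.

Lemma AA_le (R : realType) n (F : 'I_n -> protocol R) i T :
  (forall j, is_protocol (F j)) -> (n <= 4)%N ->
  AA F i T <= (T%:R + 4%:R) * qq F i T.
Proof.
move=> hF hn; rewrite /AA /qq big_distrr /=; apply: ler_sum => u _.
set sw := run F (init_state n) 1 u.
have W0 : 0 <= sw.2 by apply: run_ge0.
case: (i \in sw.1.1) => /=; last by rewrite !mul0r mulr0.
rewrite mul1r mulr1 mulrC; apply: ler_wpM2r => //.
rewrite lerD2l; apply: V_le4.
by apply: leq_trans (max_card _) _; rewrite card_ord.
Qed.

Lemma plat_ge0 (R : realType) n (F : 'I_n -> protocol R) i t :
  (forall j, is_protocol (F j)) -> 0 <= plat F i t.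
Proof.
move=> hF; rewrite /plat; apply: sumr_ge0 => u _; apply: sumr_ge0 => a _ /=.
by rewrite !mulr_ge0 ?weight_ge0 ?run_ge0 ?ler0n.
Qed.



Lemma arith (R : realType) (c bT bU x y z e : R) :
  c <= bT + (z + 4%:R) * x -> (z + 1) * (x - y) <= bU - bT ->
  (z + 1) * y <= e / 2%:R -> x <= e / 6%:R -> c <= bU + e.
Proof.
rewrite !mulrDl !mulrBr !mul1r.
set zx := z * x; set zy := z * y.
lra.
Qed.

Lemma final (R : realType) (p : nat -> R) (c : R) :
  (forall t, 0 <= p t) ->
  (forall T, c <= \sum_(1 <= t < T.+1) t%:R * p t +
                  (T%:R + 4%:R) * (1 - \sum_(1 <= t < T.+1) p t)) ->
  (c%:E <= \sum_(1 <= t <oo) (t%:R * p t)%:E +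
     (if (\sum_(1 <= t <oo) (p t)%:E < 1)%E then +oo else 0))%E.
Proof.
move=> p0 hc.
set S := (\sum_(1 <= t <oo) (t%:R * p t)%:E)%E.
have tp0 : forall t, (1 <= t)%N -> true -> (0 <= (t%:R * p t)%:E)%E.
  by move=> t _ _; rewrite lee_fin mulr_ge0.
have S0 : (0 <= S)%E by apply: nneseries_ge0.
case: ifPn => [_|].
  by rewrite addey ?leey // gt_eqF // (lt_le_trans _ S0) ?ltNye.
rewrite -leNgt adde0 => h1.
pose B T := \sum_(1 <= t < T.+1) t%:R * p t.
pose Q T := 1 - \sum_(1 <= t < T.+1) p t.
have BS : forall U, ((B U)%:E <= S)%E.
  move=> U; rewrite /B -sumEFin; exact: nneseries_lim_ge.
have split_sum : forall (f : nat -> R) T U, (T <= U)%N ->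
    \sum_(1 <= t < U.+1) f t = \sum_(1 <= t < T.+1) f t + \sum_(T.+1 <= t < U.+1) f t.
  by move=> f T U TU; rewrite (big_cat_nat _ (n := T.+1)).
have Qdec : forall T U, (T <= U)%N -> Q U <= Q T.
  move=> T U TU; rewrite /Q (split_sum _ _ _ TU).
  have : 0 <= \sum_(T.+1 <= t < U.+1) p t by apply: sumr_ge0.
  lra.
have Bgrow : forall T U, (T <= U)%N -> T.+1%:R * (Q T - Q U) <= B U - B T.
  move=> T U TU; rewrite /B /Q !(split_sum _ _ _ TU).
  have -> : forall x y : R, (1 - x) - (1 - (x + y)) = y by move=> *; ring.
  have -> : forall x y : R, (x + y) - x = y by move=> *; ring.
  rewrite big_distrr /=; rewrite big_nat [X in _ <= X]big_nat; apply: ler_sum => t /andP[Tt _].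
  by apply: ler_wpM2r => //; rewrite ler_nat.
have Qsmall : forall d, 0 < d -> exists U, Q U <= d.
  move=> d d0; apply: contrapT => H.
  have H' : forall W, d < Q W.
    by move=> W; rewrite ltNge; apply/negP => hW; apply: H; exists W.
  have : (\sum_(1 <= t <oo) (p t)%:E <= (1 - d)%:E)%E.
    apply: (lime_le (is_cvg_nneseries _)) => [t _ _|]; first by rewrite lee_fin.
    apply: nearW => k; case: k => [|k]; first by rewrite big_geq // lee_fin; move: (H' 0%N); rewrite /Q big_geq //; lra.
    rewrite sumEFin lee_fin; move: (H' k); rewrite /Q; lra.
  move=> h2; have := le_trans h1 h2; rewrite lee_fin; lra.
apply/lee_addgt0Pr => e e0.
have h6 : 0 < e / 6%:R by rewrite divr_gt0 // ltr0n.
have [T hT] := Qsmall (e / 6%:R) h6.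
have h7 : 0 < e / (2%:R * T.+1%:R) by rewrite divr_gt0 // mulr_gt0 // ltr0n.
have [U0 hU0] := Qsmall _ h7.
have TU : (T <= maxn T U0)%N by rewrite leq_maxl.
have hU : Q (maxn T U0) <= e / (2%:R * T.+1%:R) by apply: le_trans (Qdec _ _ (leq_maxr _ _)) hU0.
have hg := Bgrow _ _ TU.
have h4 : T.+1%:R * Q (maxn T U0) <= e / 2%:R.
  have Tp : T.+1%:R != 0 :> R by rewrite pnatr_eq0.
  apply: le_trans (ler_wpM2l (ler0n _ T.+1) hU) _.
  rewrite le_eqVlt; apply/orP; left; apply/eqP; field.
  by rewrite addrC natr1.
have hcT : c <= B T + (T%:R + 4%:R) * Q T := hc T.
have eT : T.+1%:R = T%:R + 1 :> R by rewrite -natr1.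
rewrite eT in hg h4.
apply: le_trans (leeD2r _ (BS (maxn T U0))); rewrite -EFinD lee_fin.
exact: (arith _ _ _ _ _ _ _ _ hcT hg h4 hT).
Qed.


Theorem lemma5 (R : realType) (n : nat) (i : 'I_n) (r : protocol R) :
  (2 <= n <= 4)%N -> is_protocol r -> ~ in_G i r ->
  (((2 ^ n)%:R / n%:R : R)%:E <=
     exp_latency (fun j : 'I_n => if j == i then r else f2 R) i)%E.
Proof.
move=> /andP[n2 n4] hr _.
set F := fun j : 'I_n => if j == i then r else f2 R.
have hF : forall j, is_protocol (F j).
  by move=> j; rewrite /F; case: (j == i) => //; exact: f2_prot.
have hFo : forall j, j != i -> F j = f2 R by move=> j /negbTE; rewrite /F => ->.
have hVn : V R n = (2 ^ n)%:R / n%:R.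
  by rewrite /V; case: (eqVneq n 1%N) => // n1; move: n2; rewrite n1.
rewrite /exp_latency -hVn.
apply: final; first by move=> t; apply: plat_ge0.
move=> T; apply: (le_trans (pot_all _ _ _ _ T hF hFo n4)).
by rewrite addrC lerD2l -q_all //; apply: AA_le.
Qed.
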